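(* Let $p\geq2$, $n_1,\dots,n_l\geq1$ be integers with $\sum_j p^{-n_j}=1$ and let $T_p$ be the map satisfying Condition 1 with slopes $\Lambda_j=p^{n_j}$. Let $U_\Bbbk$ be a quantization of $T_p$ with respect to the partition of $[0,1]$ into $N_\Bbbk=p^\Bbbk$ equal intervals, let $\psi_\Bbbk$ be a normalized eigenvector of $U_\Bbbk$ and $\mu_\Bbbk$ the associated measure. Let $n_{\mathrm E}=\lfloor\log N_\Bbbk/\log\Lambda_{\max}\rfloor$ and write $n_{\mathrm E}=qn+r$ with integers $q,n\geq1$, $0\leq r<n$. Then $$p_{n_{\mathrm E},v}(\mu_\Bbbk)\leq q\,p_{n,v}(\mu_\Bbbk)+p_{r,v}(\mu_\Bbbk).$$
   Context: Condition 1: $[0,1]$ is divided into consecutive intervals $I_1,\dots,I_l$ with $|I_j|=\Lambda_j^{-1}$ and $T_p$ is affine with slope $\Lambda_j$ on $I_j$ mapping $I_j$ onto $[0,1]$. Let $E_i=[(i-1)/N_\Bbbk,i/N_\Bbbk]$ and $B(i,j)=|E_i\cap T_p^{-1}E_j|/|E_i|$; a quantization is a unitary $U_\Bbbk$ with $B(j,i)=|U_\Bbbk(i,j)|^2$. $\mathrm{Op}_\Bbbk(f)$ is the diagonal matrix with $(i,i)$ entry $N_\Bbbk\int_{E_i}f\,dx$, and $\mu_\Bbbk$ is the probability measure with $\int f\,d\mu_\Bbbk=\langle\psi_\Bbbk,\mathrm{Op}_\Bbbk(f)\psi_\Bbbk\rangle$. For a word $\varepsilon=\varepsilon_0\dots\varepsilon_{n-1}\in\{1,\dots,l\}^n$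 let $[\![\varepsilon]\!]=\bigcap_{i=0}^{n-1}T_p^{-i}I_{\varepsilon_i}$ and $v_\varepsilon=\prod_{i=0}^{n-1}\Lambda_{\varepsilon_i}^{-1/2}$. For a measure $\nu$, the pressure is $p_{n,v}(\nu)=-\sum_{|\varepsilon|=n}\nu([\![\varepsilon]\!])\log\big(v_\varepsilon^2\,\nu([\![\varepsilon]\!])\big)$ (with $0\log0=0$; for $n=0$ it is $0$). *)

(* Defs.v *)
From mathcomp Require Import all_boot all_order all_algebra.
From mathcomp Require Import all_classical all_reals all_analysis.
From mathcomp Require Import complex.
Import Order.TTheory GRing.Theory Num.Theory.

Set Implicit Arguments.
Unset Strict Implicit.
Unset Printing Implicit Defensive.

Local Open Scope classical_set_scope.
Local Open Scope ring_scope.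

(* Indices are 0-based: the branches are j : 'I_l, the cells i : 'I_N. *)

Definition Lam {R : realType} (p l : nat) (nn : 'I_l -> nat) (j : 'I_l) : R :=
  (p ^ nn j)%:R.

Definition aL {R : realType} (p l : nat) (nn : 'I_l -> nat) (j : 'I_l) : R :=
  \sum_(m < l | (m < j)%N) (Lam p nn m)^-1.

(* the consecutive intervals I_j of length Lambda_j^{-1}, starting at 0;
   half-open [a_j, a_j + Lambda_j^-1), the last one closed, so that they
   partition [0,1] *)
Definition Iint {R : realType} (p l : nat) (nn : 'I_l -> nat) (j : 'I_l) : set R :=
  if (j.+1 == l)%N then
    [set x | aL p nn j <= x <= aL p nn j + (Lam p nn j)^-1]
  else [set x | aL p nn j <= x < aL p nn j + (Lam p nn j)^-1].

(* the map T_p of Condition 1: affine with slope Lambda_j on I_j, mapping I_j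
   onto [0,1] (it is 0 outside [0,1], which is irrelevant) *)
Definition Tp {R : realType} (p l : nat) (nn : 'I_l -> nat) (x : R) : R :=
  \sum_(j < l) (\1_(Iint p nn j) x) * (Lam p nn j * (x - aL p nn j)).

(* E_i = [i/N, (i+1)/N] (0-based version of [(i-1)/N, i/N]) *)
Definition Ecell {R : realType} (N : nat) (i : 'I_N) : set R :=
  [set x | i%:R / N%:R <= x <= i.+1%:R / N%:R].

Definition Bmat {R : realType} (p l : nat) (nn : 'I_l -> nat) (N : nat)
  (i j : 'I_N) : R :=
  fine (@lebesgue_measure R (Ecell i `&` (Tp p nn @^-1` Ecell j)))
  / fine (@lebesgue_measure R (Ecell i)).

Definition adjmx {R : realType} (N : nat) (U : 'M[R[i]]_N) : 'M[R[i]]_N :=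
  \matrix_(i, j) ((U j i)^*)%C.

Definition unitary {R : realType} (N : nat) (U : 'M[R[i]]_N) : Prop :=
  adjmx U *m U = 1%:M /\ U *m adjmx U = 1%:M.

Definition quantization {R : realType} (p l : nat) (nn : 'I_l -> nat) (N : nat)
  (U : 'M[R[i]]_N) : Prop :=
  unitary U /\ forall i j : 'I_N, `|U i j| ^+ 2 = (Bmat p nn j i)%:C%C.

Definition Op {R : realType} (N : nat) (f : R -> R) : 'M[R[i]]_N :=
  \matrix_(i, j) (if i == j then
                    ((N%:R * Rintegral (@lebesgue_measure R) (Ecell i) f)%:C)%C
                  else 0).

Definition inner_op {R : realType} (N : nat) (psi : 'cV[R[i]]_N)
  (A : 'M[R[i]]_N) : R[i] :=
  \sum_(i < N) ((psi i 0)^*)%C * (A *m psi) i 0.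

Definition mu_psi {R : realType} (N : nat) (psi : 'cV[R[i]]_N) (A : set R) : R :=
  complex.Re (inner_op psi (Op N (\1_A : R -> R))).

Definition cyl {R : realType} (p l : nat) (nn : 'I_l -> nat) (n : nat)
  (e : n.-tuple 'I_l) : set R :=
  [set x | forall i : 'I_n, Iint p nn (tnth e i) (iter i (Tp p nn) x)].

Definition veps {R : realType} (p l : nat) (nn : 'I_l -> nat) (n : nat)
  (e : n.-tuple 'I_l) : R :=
  \prod_(i < n) (Num.sqrt (Lam p nn (tnth e i)))^-1.

(* pressure p_{n,v}(nu); 0 log 0 = 0 holds since the factor nu(..) is 0 *)
Definition pressure {R : realType} (p l : nat) (nn : 'I_l -> nat)
  (nu : set R -> R) (n : nat) : R :=
  if n == 0%N then 0 else
  - \sum_(e : n.-tuple 'I_l)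
      nu (cyl p nn e) * ln (veps p nn e ^+ 2 * nu (cyl p nn e)).

Definition Lmax (p l : nat) (nn : 'I_l -> nat) : nat := \max_(j < l) (p ^ nn j).

(* Main.v *)
Require Import Defs.
From mathcomp Require Import all_boot all_order all_algebra.
From mathcomp Require Import all_classical all_reals all_analysis.
From mathcomp Require Import complex.
From mathcomp Require Import zify ring lra.
Import Order.TTheory GRing.Theory Num.Theory.
Local Open Scope classical_set_scope.
Local Open Scope ring_scope.

Set Implicit Arguments.
Unset Strict Implicit.
Unset Printing Implicit Defensive.
Section Ent.
Variable R : realType.
Variable T : finType.

Definition Stp (m : nat) (f : seq T -> R) := \sum_(e : m.-tuple T) f e.

Lemma Stp0 f : Stp 0 f = f [::].
Proof.
rewrite /Stp (big_pred1 (nil_tuple T)) // => e.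
by rewrite /= [e]tuple0 eqxx.
Qed.

Lemma Stp_cons m f : Stp m.+1 f = \sum_(a : T) Stp m (fun s => f (a :: s)).
Proof.
rewrite /Stp pair_big /=.
rewrite (reindex (fun t : m.+1.-tuple T => (thead t, [tuple of behead t]))) /=.
  by apply: eq_bigr => t _; rewrite {1}(tuple_eta t).
apply: onW_bij; exists (fun q : T * m.-tuple T => [tuple of q.1 :: q.2]) => /=.
  by move=> t; rewrite /= -tuple_eta.
move=> [a t] /=; rewrite /thead tnth0; congr pair; exact: val_inj.
Qed.

Lemma Stp_catT (f : seq T -> R) m1 m2 :
  Stp (m1 + m2) f = Stp m1 (fun s1 => Stp m2 (fun s2 => f (s1 ++ s2))).
Proof.
elim: m1 f => [|m1 IH] f; first by rewrite Stp0.
rewrite addSn !Stp_cons; apply: eq_bigr => c _; exact: IH.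
Qed.

Lemma ln_le_sub1 (t : R) : 0 < t -> ln t <= t - 1.
Proof.
move=> t0; have H : -1 < t - 1 by lra.
have := le_ln1Dx H; rewrite (_ : 1 + (t - 1) = t) //; ring.
Qed.

Lemma gibbs_pt (c1 c2 r1 r2 q : R) : 0 < c1 -> 0 < c2 -> 0 <= q -> q <= r1 -> q <= r2 ->
  q * ln (c1 * r1) + q * ln (c2 * r2) + q - r1 * r2 <= q * ln (c1 * c2 * q).
Proof.
move=> h1 h2 hq q1 q2.
case: (eqVneq q 0) => [->|q0].
  rewrite !mul0r !add0r; have : 0 <= r1 * r2 by apply: mulr_ge0; lra.
  lra.
have qp : 0 < q by rewrite lt_def q0.
have r1p : 0 < r1 by lra.
have r2p : 0 < r2 by lra.
rewrite !lnM ?posrE ?mulr_gt0 //.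
have tp : 0 < r1 * r2 / q by rewrite divr_gt0 ?mulr_gt0.
have := ln_le_sub1 tp.
rewrite lnM ?posrE ?mulr_gt0 ?invr_gt0 // lnM ?posrE // lnV ?posrE // => H.
have e : q * (r1 * r2 / q - 1) = r1 * r2 - q by field; rewrite gt_eqF.
have H2 : q * (ln r1 + ln r2 + - ln q) <= q * (r1 * r2 / q - 1) by rewrite ler_wpM2l // ltW.
rewrite e in H2; lra.
Qed.

Variables (rho v : seq T -> R) (a b : nat).
Hypothesis rho_ge0 : forall s, 0 <= rho s.
Hypothesis v_gt0 : forall s, 0 < v s.
Hypothesis v_cat : forall s1 s2, v (s1 ++ s2) = v s1 * v s2.
Hypothesis marg : forall s m, Stp m (fun e => rho (s ++ e)) = rho s.
Hypothesis inv : forall s2 : b.-tuple T, Stp a (fun e => rho (e ++ s2)) = rho s2.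
Hypothesis tot : rho [::] = 1.

Definition Fp m := - Stp m (fun s => rho s * ln (v s ^+ 2 * rho s)).

Lemma Stp_tot m : Stp m rho = 1.
Proof. by rewrite -tot -(marg [::] m). Qed.

Lemma Stp_term m (s : m.-tuple T) (f : seq T -> R) : (forall s, 0 <= f s) -> f s <= Stp m f.
Proof.
move=> hf; rewrite /Stp (bigD1 s) //= lerDl; apply: sumr_ge0 => i _; exact: hf.
Qed.


Lemma subadd : Fp (a + b) <= Fp a + Fp b.
Proof.
rewrite /Fp Stp_catT.
set L := fun s => rho s * ln (v s ^+ 2 * rho s).
set G := fun s1 s2 => rho (s1 ++ s2) * ln (v s1 ^+ 2 * rho s1) +
   rho (s1 ++ s2) * ln (v s2 ^+ 2 * rho s2) + rho (s1 ++ s2) - rho s1 * rho s2.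
have hG : Stp a (fun s1 => Stp b (fun s2 => G s1 s2)) <=
          Stp a (fun s1 => Stp b (fun s2 => L (s1 ++ s2))).
  apply: ler_sum => s1 _; apply: ler_sum => s2 _.
  rewrite /G /L v_cat exprMn.
  apply: gibbs_pt; rewrite ?exprn_gt0 //.
  - by rewrite -(marg s1 b); apply: (Stp_term s2 (f := fun e => rho (s1 ++ e))).
  - by rewrite -(inv s2); apply: (Stp_term s1 (f := fun e => rho (e ++ s2))).
have eG : Stp a (fun s1 => Stp b (fun s2 => G s1 s2)) = Stp a L + Stp b L.
  rewrite /G /Stp.
  under eq_bigr do rewrite !big_split /=.
  rewrite !big_split /=.
  under [X in _ + X = _]eq_bigr do rewrite sumrN.
  rewrite sumrN.
  have e1 : \sum_(i : a.-tuple T) \sum_(i0 : b.-tuple T)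
      rho (i ++ i0) * ln (v i ^+ 2 * rho i) = \sum_(s : a.-tuple T) L s.
    apply: eq_bigr => s1 _; rewrite -mulr_suml.
    by have := marg s1 b; rewrite /Stp => ->.
  have e2 : \sum_(i : a.-tuple T) \sum_(i0 : b.-tuple T)
      rho (i ++ i0) * ln (v i0 ^+ 2 * rho i0) = \sum_(s : b.-tuple T) L s.
    rewrite exchange_big; apply: eq_bigr => s2 _; rewrite -mulr_suml.
    by have := inv s2; rewrite /Stp => ->.
  have e3 : \sum_(i : a.-tuple T) \sum_(i0 : b.-tuple T) rho (i ++ i0) = 1.
    rewrite -(Stp_tot a); apply: eq_bigr => s1 _.
    by have := marg s1 b; rewrite /Stp => ->.
  have e4 : \sum_(i : a.-tuple T) \sum_(i0 : b.-tuple T) rho i * rho i0 = 1.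
    rewrite -[RHS](mulr1 1) -{1}(Stp_tot a) -(Stp_tot b) /Stp mulr_suml.
    by apply: eq_bigr => s1 _; rewrite mulr_sumr.
  rewrite e1 e2 e3 e4; ring.
rewrite eG in hG.
have -> : Stp a (fun s1 => Stp b (fun s2 => rho (s1 ++ s2) * ln (v (s1 ++ s2) ^+ 2 * rho (s1 ++ s2)))) =
          Stp a (fun s1 => Stp b (fun s2 => L (s1 ++ s2))) by [].
lra.
Qed.

End Ent.

Section Geo.
Variable R : realType.
Variables (p l : nat) (nn : 'I_l -> nat) (k : nat).
Hypothesis hp : (2 <= p)%N.
Hypothesis hsum : \sum_(j < l) ((p%:R : R) ^- nn j) = 1.
Hypothesis hMk : (\max_(j < l) nn j <= k)%N.

Definition Nn := (p ^ k)%N.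
Definition Anat (t : nat) : nat := (\sum_(m < l | (m < t)%N) p ^ (k - nn m))%N.

Lemma Nn_gt0 : (0 < Nn)%N.
Proof. by rewrite /Nn expn_gt0; lia. Qed.

Lemma NR_gt0 : 0 < (Nn%:R : R).
Proof. by rewrite ltr0n Nn_gt0. Qed.

Lemma nn_le_k j : (nn j <= k)%N.
Proof. exact: leq_trans (leq_bigmax j) hMk. Qed.

Lemma pX_gt0 m : (0 < p ^ m)%N.
Proof. by rewrite expn_gt0; lia. Qed.

Lemma Anat_mono t1 t2 : (t1 <= t2)%N -> (Anat t1 <= Anat t2)%N.
Proof.
move=> h; rewrite /Anat big_mkcond [X in (_ <= X)%N]big_mkcond /=.
apply: leq_sum => m _; case: ifP => // hm.
by rewrite (leq_trans hm h).
Qed.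

Lemma AnatS (j : 'I_l) : Anat j.+1 = (Anat j + p ^ (k - nn j))%N.
Proof.
rewrite /Anat (bigD1 j) //= addnC; congr (_ + _)%N.
by apply: eq_bigl => m; rewrite ltnS ltn_neqAle andbC.
Qed.

Lemma Anat0 : Anat 0 = 0%N.
Proof. by rewrite /Anat big_pred0 // => m. Qed.

Lemma Anat_l : Anat l = Nn.
Proof.
apply/eqP; rewrite -(eqr_nat R); apply/eqP.
rewrite /Anat (eq_bigl xpredT); last by move=> m; rewrite ltn_ord.
rewrite natr_sum /Nn.
have -> : ((p ^ k)%N%:R : R) = \sum_(j < l) ((p%:R : R) ^- nn j) * (p ^ k)%N%:R.
  by rewrite -mulr_suml hsum mul1r.
apply: eq_bigr => j _.
have hk := nn_le_k j.
have h0 : ((p ^ nn j)%N%:R : R) != 0 by rewrite pnatr_eq0 -lt0n pX_gt0.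
by rewrite -natrX -{2}(subnK hk) expnD natrM mulrC mulfK.
Qed.

Lemma aL_nat (j : 'I_l) : aL p nn j = (Anat j)%:R / Nn%:R :> R.
Proof.
rewrite /aL /Anat natr_sum mulr_suml; apply: eq_bigr => m _.
have hk := nn_le_k m.
rewrite /Lam /Nn -{2}(subnK hk) expnD natrM.
have h0 : ((p ^ nn m)%N%:R : R) != 0 by rewrite pnatr_eq0 -lt0n pX_gt0.
have h1 : ((p ^ (k - nn m))%N%:R : R) != 0 by rewrite pnatr_eq0 -lt0n pX_gt0.
by rewrite invfM mulrA mulfV // mul1r.
Qed.

Lemma hi_nat (j : 'I_l) :
  aL p nn j + (Lam p nn j)^-1 = (Anat j.+1)%:R / Nn%:R :> R.
Proof.
rewrite aL_nat AnatS natrD mulrDl; congr (_ + _).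
have hk := nn_le_k j.
rewrite /Lam /Nn -{2}(subnK hk) expnD natrM.
have h0 : ((p ^ nn j)%N%:R : R) != 0 by rewrite pnatr_eq0 -lt0n pX_gt0.
have h1 : ((p ^ (k - nn j))%N%:R : R) != 0 by rewrite pnatr_eq0 -lt0n pX_gt0.
by rewrite invfM mulrA mulfV // mul1r.
Qed.

Lemma IintE (j : 'I_l) (x : R) :
  Iint p nn j x <->
  (Anat j)%:R / Nn%:R <= x /\
  (x < (Anat j.+1)%:R / Nn%:R \/ (j.+1 == l)%N /\ x = (Anat j.+1)%:R / Nn%:R).
Proof.
rewrite /Iint -aL_nat -hi_nat; case: ifP => hj /=.
    split.
    move=> /andP[h1 h2]; split => //.
    move: h2; rewrite le_eqVlt => /orP[/eqP->|->]; [by right|by left].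
  by case=> h1 [h2|[_ hx]]; apply/andP; split => //; [exact: ltW h2|rewrite hx].
split; first by move=> /andP[h1 h2]; split => //; left.
by case=> h1 [h2|[]] //; apply/andP.
Qed.


Lemma Adiv_le t1 t2 : (t1 <= t2)%N -> (Anat t1)%:R / Nn%:R <= (Anat t2)%:R / Nn%:R :> R.
Proof.
move=> h; apply: ler_wpM2r; first by rewrite invr_ge0 ltW // NR_gt0.
by rewrite ler_nat Anat_mono.
Qed.

Lemma Iint_disj (a b : 'I_l) (x : R) : Iint p nn a x -> Iint p nn b x -> a = b.
Proof.
have key : forall a b : 'I_l, (a < b)%N -> Iint p nn a x -> Iint p nn b x -> False.
  move=> a' b' hab /IintE[h1 h2] /IintE[h3 h4].
  have ha : (a'.+1 == l)%N = false by apply/negbTE; have := ltn_ord b'; lia.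
  have h5 : x < (Anat a'.+1)%:R / Nn%:R by case: h2 => // -[]; rewrite ha.
  have := Adiv_le hab; lra.
move=> ha hb; case: (ltngtP a b) => h.
- by case: (key _ _ h ha hb).
- by case: (key _ _ h hb ha).
- exact: val_inj.
Qed.

Lemma Tp_on (a : 'I_l) (x : R) : Iint p nn a x -> Tp p nn x = Lam p nn a * (x - aL p nn a).
Proof.
move=> ha; rewrite /Tp (bigD1 a) //= big1 ?addr0.
  by rewrite indicE mem_set // mul1r.
move=> b hb; rewrite indicE memNset ?mul0r //.
by move=> hb'; move/eqP: hb; apply; exact: Iint_disj hb' ha.
Qed.

Lemma branch_ex j : (j < Nn)%N -> exists a : 'I_l, (Anat a <= j < Anat a.+1)%N.
Proof.
move=> hj.
have ex : exists t, (j < Anat t)%N by exists l; rewrite Anat_l.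
case: (ex_minnP ex) => t ht hmin.
have t0 : (0 < t)%N by case: t ht {hmin} => //; rewrite Anat0.
have tl : (t <= l)%N by apply: hmin; rewrite Anat_l.
have hlt : (t.-1 < l)%N by lia.
exists (Ordinal hlt) => /=.
rewrite prednK // ht andbT leqNgt; apply/negP => hc.
have := hmin _ hc; lia.
Qed.

Lemma branch_uniq (a b : 'I_l) j : (Anat a <= j < Anat a.+1)%N ->
  (Anat b <= j < Anat b.+1)%N -> a = b.
Proof.
have key : forall a b : 'I_l, (a < b)%N -> (Anat a <= j < Anat a.+1)%N ->
    (Anat b <= j < Anat b.+1)%N -> False.
  move=> a' b' hab /andP[h1 h2] /andP[h3 h4].
  have := Anat_mono hab; lia.
move=> ha hb; case: (ltngtP a b) => h.
- by case: (key _ _ h ha hb).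
- by case: (key _ _ h hb ha).
- exact: val_inj.
Qed.

Lemma branch_next (a : 'I_l) j : (Anat a <= j < Anat a.+1)%N ->
  ((j - Anat a) * p ^ nn a < Nn)%N.
Proof.
move=> /andP[h1 h2]; rewrite AnatS in h2.
have h3 : (j - Anat a < p ^ (k - nn a))%N by lia.
rewrite /Nn -(subnK (nn_le_k a)) expnD ltn_pmul2r //; exact: pX_gt0.
Qed.

Fixpoint inR (s : seq 'I_l) (j : nat) : bool :=
  match s with
  | [::] => (j < Nn)%N
  | a :: s' => (Anat a <= j < Anat a.+1)%N && inR s' ((j - Anat a) * p ^ nn a)
  end.

Lemma inR_lt s j : inR s j -> (j < Nn)%N.
Proof.
case: s => //= a s /andP[/andP[_ h] _].
apply: leq_trans h _; rewrite -Anat_l; apply: Anat_mono; exact: ltn_ord.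
Qed.

Lemma branch_sum j : \sum_(a < l) ((Anat a <= j < Anat a.+1)%N)%:R = ((j < Nn)%N)%:R :> R.
Proof.
case: (boolP (j < Nn)%N) => hj.
  have [a ha] := branch_ex hj.
  rewrite (bigD1 a) //= ha big1 ?addr0 // => b hb.
  case: (boolP (Anat b <= j < Anat b.+1)%N) => // hb'.
  by move/eqP: hb; case; exact: branch_uniq hb' ha.
rewrite big1 // => a _; case: (boolP (Anat a <= j < Anat a.+1)%N) => // ha.
by move: hj; rewrite (inR_lt (s := [:: a])) //= ha /= branch_next.
Qed.

Definition Stup (m : nat) (f : seq 'I_l -> R) := \sum_(e : m.-tuple 'I_l) f e.

Lemma Stup0 f : Stup 0 f = f [::].
Proof.
rewrite /Stup (big_pred1 (nil_tuple 'I_l)) // => e.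
by rewrite /= [e]tuple0 eqxx.
Qed.

Lemma Stup_cons m f : Stup m.+1 f = \sum_(a < l) Stup m (fun s => f (a :: s)).
Proof.
rewrite /Stup pair_big /=.
rewrite (reindex (fun t : m.+1.-tuple 'I_l => (thead t, [tuple of behead t]))) /=.
  by apply: eq_bigr => t _; rewrite {1}(tuple_eta t).
apply: onW_bij; exists (fun q : 'I_l * m.-tuple 'I_l => [tuple of q.1 :: q.2]) => /=.
  by move=> t; rewrite /= -tuple_eta.
move=> [a t] /=; rewrite /thead tnth0; congr pair; exact: val_inj.
Qed.

Lemma Stup_cat a b f :
  Stup (a + b) f = Stup a (fun s1 => Stup b (fun s2 => f (s1 ++ s2))).
Proof.
elim: a f => [|a IH] f; first by rewrite Stup0.
rewrite addSn !Stup_cons; apply: eq_bigr => c _; exact: IH.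
Qed.

Lemma boolRM (b c : bool) : ((b && c)%:R : R) = b%:R * c%:R.
Proof. by case: b c => [] []; rewrite ?mul1r ?mul0r. Qed.

Lemma inR_tot b j : Stup b (fun e => (inR e j)%:R) = ((j < Nn)%N)%:R.
Proof.
elim: b j => [|b IH] j; first by rewrite Stup0.
rewrite Stup_cons -branch_sum; apply: eq_bigr => a _ /=.
rewrite /Stup; under eq_bigr do rewrite boolRM.
rewrite -mulr_sumr; have := IH ((j - Anat a) * p ^ nn a)%N; rewrite /Stup => ->.
case: (boolP (Anat a <= j < Anat a.+1)%N) => ha; last by rewrite !mul0r.
by rewrite branch_next // mulr1.
Qed.

Lemma inR_marg b s j : Stup b (fun e => (inR (s ++ e) j)%:R) = (inR s j)%:R.
Proof.
elim: s j => [|a s IH] j /=; first exact: inR_tot.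
rewrite /Stup; under eq_bigr do rewrite boolRM.
rewrite -mulr_sumr; have := IH ((j - Anat a) * p ^ nn a)%N; rewrite /Stup => ->.
by rewrite [RHS]boolRM.
Qed.


Definition Mx := (\max_(j < l) nn j)%N.

Lemma nn_le_Mx j : (nn j <= Mx)%N.
Proof. exact: leq_bigmax. Qed.

Fixpoint cylS (s : seq 'I_l) : set R :=
  match s with
  | [::] => setT
  | a :: s' => [set x | Iint p nn a x /\ cylS s' (Tp p nn x)]
  end.

Lemma blk (P m n : nat) (X : R) : (0 < P)%N -> (m * P)%:R <= X -> X < (m.+1 * P)%:R ->
  ((n * P)%:R <= X <-> (n <= m)%N) /\ (X < (n * P)%:R <-> (m < n)%N).
Proof.
move=> hP h1 h2; split; split => h.
- have : (n * P)%:R < (m.+1 * P)%:R :> R by exact: le_lt_trans h h2.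
  by rewrite ltr_nat ltn_pmul2r.
- apply: le_trans h1; by rewrite ler_nat leq_mul.
- have : (m * P)%:R < (n * P)%:R :> R by exact: le_lt_trans h1 h.
  by rewrite ltr_nat ltn_pmul2r.
- apply: lt_le_trans h2 _; by rewrite ler_nat leq_mul.
Qed.

Lemma Advd g t : (g + Mx <= k)%N -> (p ^ g %| Anat t)%N.
Proof.
move=> hg; rewrite /Anat; apply: dvdn_sum => m _.
apply: dvdn_exp2l; have := nn_le_Mx m; lia.
Qed.

Lemma divN_le (a x : R) : a / Nn%:R <= x <-> a <= x * Nn%:R.
Proof. by rewrite ler_pdivrMr ?NR_gt0. Qed.

Lemma ltdivN (a x : R) : x < a / Nn%:R <-> x * Nn%:R < a.
Proof. by rewrite ltr_pdivlMr ?NR_gt0. Qed.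

Lemma CA (s : seq 'I_l) : forall g u (x : R), (g + size s * Mx <= k)%N ->
  (u.+1 * p ^ g <= Nn)%N -> (u * p ^ g)%:R <= x * Nn%:R ->
  x * Nn%:R < (u.+1 * p ^ g)%:R -> (cylS s x <-> inR s (u * p ^ g)).
Proof.
elim: s => [|a s IH] g u x hg hu h1 h2 /=.
  split => // _; have := pX_gt0 g; nia.
have hgM : (g + Mx <= k)%N by move: hg; rewrite /= mulSn; lia.
have hP := pX_gt0 g.
have [ta eA] := dvdnP (@Advd _ a hgM).
have [tb eB] := dvdnP (@Advd _ a.+1 hgM).
have [hb1 hb2] := blk ta hP h1 h2.
have [hc1 hc2] := blk tb hP h1 h2.
have hIint : Iint p nn a x <-> (Anat a <= u * p ^ g < Anat a.+1)%N.
  rewrite IintE eA eB leq_pmul2r // ltn_pmul2r // divN_le ltdivN hb1 hc2.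
  split; first by case=> -> [->//|[/eqP hl hx]];
    move: h2; rewrite hx mulfVK ?gt_eqF ?NR_gt0 // -eB hl Anat_l ltr_nat; lia.
  by move=> /andP[-> ->]; split => //; left.
suff key : (Anat a <= u * p ^ g < Anat a.+1)%N ->
    (cylS s (Tp p nn x) <-> inR s ((u * p ^ g - Anat a) * p ^ nn a)).
  split; first by case=> /hIint hb hc; rewrite hb /=; apply/(key hb).
  by move=> /andP[hb hc]; split; [apply/hIint|apply/(key hb)].
move=> hb; move: (hb); rewrite eA eB leq_pmul2r // ltn_pmul2r // => /andP[hta htb].
have e : ((u * p ^ g - ta * p ^ g) * p ^ nn a = (u - ta) * p ^ (g + nn a))%N.
  by rewrite -mulnBl expnD mulnA.
rewrite e; apply: IH.
- by move: hg; rewrite /= mulSn; have := nn_le_Mx a; lia.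
- have hts : ((tb - ta) * p ^ g = p ^ (k - nn a))%N.
    by rewrite mulnBl -eA -eB AnatS; lia.
  have hN : (p ^ (k - nn a) * p ^ nn a = Nn)%N by rewrite -expnD subnK // nn_le_k.
  rewrite -hN expnD mulnA leq_mul2r; apply/orP; right.
  by rewrite -hts leq_mul2r; apply/orP; right; lia.
- have hI : Iint p nn a x by apply/hIint.
  rewrite (Tp_on hI) aL_nat eA /Lam.
  rewrite mulnC expnD natrM natrB // !natrM.
  have hQ : 0 < ((p ^ nn a)%N%:R : R) by rewrite ltr0n pX_gt0.
  have hN := NR_gt0.
  rewrite natrM in h1.
  have -> : (p ^ nn a)%:R * (x - ta%:R * (p ^ g)%:R / Nn%:R) * Nn%:R =
     (p ^ nn a)%:R * (x * Nn%:R - ta%:R * (p ^ g)%:R) :> R.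
    by field; rewrite gt_eqF.
  nra.
- have hI : Iint p nn a x by apply/hIint.
  rewrite (Tp_on hI) aL_nat eA /Lam.
  rewrite expnD !natrM.
  have hQ : 0 < ((p ^ nn a)%N%:R : R) by rewrite ltr0n pX_gt0.
  have hN := NR_gt0.
  rewrite natrM in h2.
  have -> : (p ^ nn a)%:R * (x - ta%:R * (p ^ g)%:R / Nn%:R) * Nn%:R =
     (p ^ nn a)%:R * (x * Nn%:R - ta%:R * (p ^ g)%:R) :> R.
    by field; rewrite gt_eqF.
  have hs : ((u - ta).+1%:R : R) = u.+1%:R - ta%:R by rewrite -natrB; [congr (_%:R); lia | lia].
  rewrite hs.
  nra.
Qed.


Lemma DA s g u v : (g + size s * Mx <= k)%N -> (v < p ^ g)%N ->
  inR s (u * p ^ g + v) = inR s (u * p ^ g).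
Proof.
move=> hg hv.
have hP := pX_gt0 g.
case: (leqP (u.+1 * p ^ g) Nn) => hu.
  have eS : (u.+1 * p ^ g = u * p ^ g + p ^ g)%N by rewrite mulSnr.
  set x : R := (u * p ^ g + v)%:R / Nn%:R.
  have hxN : x * Nn%:R = (u * p ^ g + v)%:R by rewrite /x mulfVK // gt_eqF // NR_gt0.
  have h1 := @CA s g u x hg hu.
  have h2 := @CA s 0 (u * p ^ g + v) x.
  rewrite expn0 !muln1 in h2.
  have c1 : (u * p ^ g)%:R <= x * Nn%:R by rewrite hxN ler_nat; lia.
  have c2 : x * Nn%:R < (u.+1 * p ^ g)%:R by rewrite hxN ltr_nat; lia.
  have c3 : ((u * p ^ g + v).+1 <= Nn)%N by lia.
  have c4 : ((u * p ^ g + v)%:R <= x * Nn%:R) by rewrite hxN.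
  have c5 : (x * Nn%:R < (u * p ^ g + v).+1%:R) by rewrite hxN ltr_nat.
  have e1 := h1 c1 c2.
  have c6 : (0 + size s * Mx <= k)%N by move: hg; lia.
  have e2 := h2 c6 c3 c4 c5.
  by apply/idP/idP => H; [apply/e1/e2 | apply/e2/e1].
have hgk : (g <= k)%N by lia.
have [c ec] : exists c, Nn = (c * p ^ g)%N.
  by exists (p ^ (k - g))%N; rewrite /Nn -expnD subnK.
have hc : (c <= u)%N by move: hu; rewrite ec ltn_pmul2r //.
have hN : (Nn <= u * p ^ g)%N by rewrite ec leq_mul2r hc orbT.
apply/idP/idP => /inR_lt; lia.
Qed.

Lemma cellR s i (x : R) : (size s * Mx <= k)%N -> (i < Nn)%N ->
  i%:R / Nn%:R <= x -> x < i.+1%:R / Nn%:R -> (cylS s x <-> inR s i).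
Proof.
move=> hs hi h1 h2.
have := @CA s 0 i x; rewrite expn0 !muln1; apply => //.
- by rewrite -divN_le.
- by rewrite -ltdivN.
Qed.

Lemma sandw (a b : R) (B : set R) : a < b -> `[a, b[ `<=` B -> B `<=` `[a, b] ->
  measurable B /\ lebesgue_measure B = (b - a)%:E.
Proof.
move=> ab h1 h2; case: (pselect (B b)) => hb.
  have -> : B = [set` `[a, b]].
    apply/seteqP; split => // x /=; rewrite in_itv /= => /andP[x1 x2].
    move: x2; rewrite le_eqVlt => /orP[/eqP->//|x2].
    by apply: h1; rewrite /= in_itv /= x1 x2.
  by split; [exact: measurable_itv | rewrite lebesgue_measure_itv /= lte_fin ab].
have -> : B = [set` `[a, b[].
  apply/seteqP; split => // x hx.
  have := h2 _ hx; rewrite /= !in_itv /= => /andP[-> x2].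
  by move: x2; rewrite le_eqVlt => /orP[/eqP xb|->//]; move: hb; rewrite -xb.
by split; [exact: measurable_itv | rewrite lebesgue_measure_itv /= lte_fin ab].
Qed.

Lemma small_meas (b : R) (B : set R) : B `<=` [set b] ->
  measurable B /\ lebesgue_measure B = 0%E.
Proof.
move=> h; split.
  case: (pselect (B b)) => hb.
    have -> : B = [set b] by apply/seteqP; split => // x /= ->.
    exact: measurable_set1.
  have -> : B = set0 by apply/seteqP; split => // x hx; move: hb; rewrite -(h _ hx).
  exact: measurable0.
apply: countable_lebesgue_measure0; apply: finite_set_countable.
exact: sub_finite_set h (finite_set1 b).
Qed.

Lemma EcellE (i : 'I_Nn) : Ecell i = [set` `[i%:R / Nn%:R, i.+1%:R / Nn%:R]] :> set R.
Proof. by apply/seteqP; split => x; rewrite /Ecell /= in_itv. Qed.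

Lemma meas_cell s (i : 'I_Nn) : (size s * Mx <= k)%N ->
  Nn%:R * Rintegral (@lebesgue_measure R) (Ecell i) (\1_(cylS s)) = (inR s i)%:R.
Proof.
move=> hs.
set a : R := i%:R / Nn%:R; set b : R := i.+1%:R / Nn%:R.
have ab : a < b by rewrite /a /b ltr_pM2r ?invr_gt0 ?NR_gt0 // ltr_nat.
have mE : measurable (Ecell i : set R) by rewrite EcellE; exact: measurable_itv.
set B := cylS s `&` (Ecell i : set R).
have eqI : (\int[@lebesgue_measure R]_(x in Ecell i) (\1_(cylS s) x)%:E =
            \int[@lebesgue_measure R]_(x in Ecell i) (\1_B x)%:E)%E.
  apply: eq_integral => x; rewrite inE => hx; rewrite !indicE /B in_setI.
  by rewrite (mem_set hx) andbT.
have BE : B `&` Ecell i = B by apply: setIidl => x [].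
rewrite /Rintegral eqI.
case: (boolP (inR s i)) => hi.
  have [mB lB] : measurable B /\ lebesgue_measure B = (b - a)%:E.
    apply: sandw => // x.
      rewrite /= in_itv /= => /andP[x1 x2]; split.
        by apply/(cellR hs (ltn_ord i) x1 x2).
      by rewrite /Ecell /= x1 (ltW x2).
    by move=> [_]; rewrite /Ecell /= in_itv.
  rewrite integral_indic // BE (_ : fine _ = b - a); last exact: (congr1 fine lB).
  rewrite /a /b -mulrBl -natrB // subSnn.
  by rewrite mul1r mulfV // gt_eqF // NR_gt0.
have [mB lB] : measurable B /\ lebesgue_measure B = 0%E.
  apply: (@small_meas b) => x [hx]; rewrite /Ecell /= => /andP[x1 x2].
  move: x2; rewrite le_eqVlt => /orP[/eqP //|x2].
  by move/negP: hi; case; apply/(cellR hs (ltn_ord i) x1 x2).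
by rewrite integral_indic // BE (_ : fine _ = 0) ?mulr0 //; exact: (congr1 fine lB).
Qed.


Definition wt (psi : 'cV[R[i]]_Nn) (j : 'I_Nn) : R :=
  complex.Re (conjc (psi j 0) * psi j 0).

Lemma wt_ge0 psi j : 0 <= wt psi j.
Proof.
rewrite /wt; case: (psi j 0) => a b /=.
by rewrite mulNr opprK addr_ge0 // -expr2 sqr_ge0.
Qed.

Lemma Re_realM (c : R) (z : R[i]) : complex.Re (c%:C%C * z) = c * complex.Re z.
Proof. by case: z => a b /=; rewrite mul0r subr0. Qed.

Lemma mu_formula (psi : 'cV[R[i]]_Nn) (A : set R) :
  mu_psi psi A = \sum_(i < Nn) Nn%:R * Rintegral (@lebesgue_measure R) (Ecell i) (\1_A) * wt psi i.
Proof.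
rewrite /mu_psi /inner_op raddf_sum; apply: eq_bigr => i _.
rewrite !mxE (bigD1 i) //= big1 ?addr0; last first.
  by move=> j hj; rewrite !mxE eq_sym (negbTE hj) mul0r.
rewrite !mxE eqxx mulrCA Re_realM; done.
Qed.

Definition rho (psi : 'cV[R[i]]_Nn) (s : seq 'I_l) : R :=
  \sum_(i < Nn) (inR s i)%:R * wt psi i.

Lemma mu_cyl psi s : (size s * Mx <= k)%N -> mu_psi psi (cylS s) = rho psi s.
Proof.
move=> hs; rewrite mu_formula; apply: eq_bigr => i _.
by rewrite meas_cell.
Qed.

Lemma cyl_cylS n (e : n.-tuple 'I_l) : cyl p nn e = cylS e :> set R.
Proof.
elim: n e => [|n IH] e.
  rewrite [e]tuple0 /=; apply/seteqP; split => x // _ [] //.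
case: e / tupleP => a e.
apply/seteqP; split => x /=.
  move=> h; split; first by have := h ord0; rewrite tnth0.
  rewrite -IH => i; have := h (lift ord0 i); rewrite tnthS /= add0n -iterS iterSr //.
rewrite /cyl /= => -[h1 h2] i; case: (unliftP ord0 i) => [j ->|->].
  rewrite tnthS /= add0n -iterS iterSr; move: h2; rewrite -IH; apply.
by rewrite tnth0.
Qed.

Lemma veps_seq n (e : n.-tuple 'I_l) :
  veps p nn e = \prod_(x <- e) (Num.sqrt (Lam p nn x) : R)^-1.
Proof. by rewrite /veps big_tuple. Qed.


Lemma Re_natM n (z : R[i]) : complex.Re (n%:R * z) = n%:R * complex.Re z.
Proof. by rewrite !mulr_natl raddfMn. Qed.

Lemma Re_sum (f : 'I_Nn -> R[i]) : complex.Re (\sum_i f i) = \sum_i complex.Re (f i).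
Proof. exact: raddf_sum. Qed.

Lemma B_zero (a : 'I_l) (i j : 'I_Nn) : (Anat a <= j < Anat a.+1)%N ->
  ~~ ((j - Anat a) * p ^ nn a <= i < (j - Anat a) * p ^ nn a + p ^ nn a)%N ->
  @Bmat R p l nn Nn j i = 0.
Proof.
move=> /andP[hj1 hj2] hi.
rewrite /Bmat; set S := (_ `&` _).
suff -> : (lebesgue_measure S = 0 :> \bar R)%E by rewrite /= mul0r.
apply: countable_lebesgue_measure0; apply: finite_set_countable.
apply: (sub_finite_set _ (finite_set2 (j%:R / Nn%:R : R) (j.+1%:R / Nn%:R))).
move=> x [hx1 hx2] /=; move: hx1 hx2; rewrite /Ecell /= => /andP[x1 x2] /andP[t1 t2].
move: x2; rewrite le_eqVlt => /orP[/eqP ->|x2]; first by right.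
left.
have hN := NR_gt0.
have hI : Iint p nn a x.
  apply/IintE; split.
    by apply: le_trans x1; apply: ler_wpM2r; [rewrite invr_ge0 ltW|rewrite ler_nat].
  left; apply: (lt_le_trans x2); apply: ler_wpM2r; [by rewrite invr_ge0 ltW|by rewrite ler_nat].
move: t1 t2; rewrite (Tp_on hI) aL_nat /Lam divN_le.
rewrite ler_pdivlMr // => t1 t2.
move: x1 x2; rewrite divN_le ltdivN => x1 x2.
set X := x * Nn%:R in x1 x2.
have hQ : 0 < ((p ^ nn a)%N%:R : R) by rewrite ltr0n pX_gt0.
have eT : (p ^ nn a)%:R * (x - (Anat a)%:R / Nn%:R) * Nn%:R =
     (p ^ nn a)%:R * (X - (Anat a)%:R) :> R.
  by rewrite /X; field; rewrite gt_eqF.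
rewrite eT in t1 t2.
have hjA : ((j - Anat a)%:R : R) = j%:R - (Anat a)%:R by rewrite natrB.
rewrite negb_and -!ltnNge in hi.
case/orP: hi => hi.
- have hi' : (i.+1%:R : R) <= (j%:R - (Anat a)%:R) * (p ^ nn a)%:R.
    by rewrite -hjA -natrM ler_nat.
  have hX : X = j%:R by nra.
  by rewrite -hX /X mulfK // gt_eqF.
- have hi' : (j%:R - (Anat a)%:R) * (p ^ nn a)%:R + (p ^ nn a)%:R <= (i%:R : R).
    by rewrite -hjA -natrM -natrD ler_nat -ltnS.
  exfalso; nra.
Qed.

Lemma U_zero (U : 'M[R[i]]_Nn) (hU : quantization p nn U) (a : 'I_l) (i j : 'I_Nn) :
  (Anat a <= j < Anat a.+1)%N ->
  ~~ ((j - Anat a) * p ^ nn a <= i < (j - Anat a) * p ^ nn a + p ^ nn a)%N ->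
  U i j = 0.
Proof.
move=> h1 h2; have := hU.2 i j; rewrite (B_zero h1 h2) => /eqP.
by rewrite expf_eq0 /= normr_eq0 => /eqP.
Qed.

Definition Bset (s : seq 'I_l) (j : nat) : bool := [exists a : 'I_l, inR (a :: s) j].

Lemma Bset_sum s j : \sum_(a < l) ((inR (a :: s) j)%:R : R) = (Bset s j)%:R.
Proof.
rewrite /Bset; case: existsP => [[a ha]|hn].
  rewrite (bigD1 a) // ha big1 => [|b hb]; first by rewrite /= addr0.
  case: (boolP (inR (b :: s) j)) => // hb'.
  move: ha hb' => /= /andP[ha _] /andP[hb' _].
  by move/eqP: hb; case; exact: branch_uniq hb' ha.
by rewrite big1 // => a _; case: (boolP (inR (a :: s) j)) => // ha; case: hn; exists a.
Qed.

Lemma supp (U : 'M[R[i]]_Nn) (hU : quantization p nn U) s (i j : 'I_Nn) :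
  ((size s).+1 * Mx <= k)%N -> U i j != 0 -> inR s i = Bset s j.
Proof.
move=> hs hU0.
have [a ha] := branch_ex (ltn_ord j).
have hB : Bset s j = inR (a :: s) j.
  rewrite /Bset; apply/existsP/idP => [[b hb]|h]; last by exists a.
  have := hb => /= /andP[hb' _].
  by rewrite -(branch_uniq hb' ha).
rewrite hB /= ha /=.
have hr : ((j - Anat a) * p ^ nn a <= i < (j - Anat a) * p ^ nn a + p ^ nn a)%N.
  by apply: contraNT hU0 => h; rewrite (U_zero hU ha h).
have [v ev hv] : exists2 v, i = ((j - Anat a) * p ^ nn a + v)%N :> nat & (v < p ^ nn a)%N.
  by exists (i - (j - Anat a) * p ^ nn a)%N; lia.
rewrite ev DA //.
by move: hs; rewrite mulSn; have := nn_le_Mx a; lia.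
Qed.


Definition nrm (f : 'I_Nn -> R[i]) : R[i] := \sum_i conjc (f i) * f i.

Lemma unit_nrm (U : 'M[R[i]]_Nn) : adjmx U *m U = 1%:M ->
  forall f : 'I_Nn -> R[i], nrm (fun i => \sum_j U i j * f j) = nrm f.
Proof.
move=> hU f; rewrite /nrm.
transitivity (\sum_j \sum_m conjc (f j) * f m * (\sum_i conjc (U i j) * U i m)).
  rewrite (eq_bigr (fun i => \sum_j \sum_m conjc (U i j * f j) * (U i m * f m))); last first.
    move=> i _; rewrite rmorph_sum mulr_suml; apply: eq_bigr => j _.
    by rewrite mulr_sumr.
  rewrite exchange_big; apply: eq_bigr => j _.
  rewrite exchange_big; apply: eq_bigr => m _.
  rewrite mulr_sumr; apply: eq_bigr => i _.
  rewrite rmorphM; ring.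
apply: eq_bigr => j _.
rewrite (bigD1 j) //= [X in _ + X]big1 ?addr0.
  have := congr1 (fun M : 'M[R[i]]_Nn => M j j) hU; rewrite !mxE eqxx /=.
  rewrite (eq_bigr (fun i => conjc (U i j) * U i j)) => [->|i _]; first by rewrite mulr1.
  by rewrite !mxE.
move=> m hm; have := congr1 (fun M : 'M[R[i]]_Nn => M j m) hU; rewrite !mxE eq_sym (negbTE hm) /=.
rewrite (eq_bigr (fun i => conjc (U i j) * U i m)) => [->|i _]; first by rewrite mulr0.
by rewrite !mxE.
Qed.

Lemma inv1 (U : 'M[R[i]]_Nn) (hU : quantization p nn U) (psi : 'cV[R[i]]_Nn)
  (heig : exists lam : R[i], U *m psi = lam *: psi)
  (hnorm : \sum_(i < Nn) `|psi i 0| ^+ 2 = 1) s :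
  ((size s).+1 * Mx <= k)%N -> \sum_(a < l) rho psi (a :: s) = rho psi s.
Proof.
move=> hs; have [lam heq] := heig.
have hU1 := (hU.1).1.
have hpsi : forall i, \sum_j U i j * psi j 0 = lam * psi i 0.
  by move=> i; have := congr1 (fun M : 'cV[R[i]]_Nn => M i 0) heq; rewrite !mxE.
have n1 : nrm (fun i => psi i 0) = 1.
  rewrite -hnorm; apply: eq_bigr => i _; by rewrite sqr_normc mulrC.
have hlam : conjc lam * lam = 1.
  have := unit_nrm hU1 (fun i => psi i 0).
  have -> : (fun i => \sum_j U i j * psi j 0) = (fun i => lam * psi i 0).
    by apply: funext => i; exact: hpsi.
  rewrite n1 /nrm => <-; rewrite -[LHS]mulr1 -n1 /nrm mulr_sumr.
  by apply: eq_bigr => i _; rewrite rmorphM; ring.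
set phi := fun j : 'I_Nn => (Bset s j)%:R * psi j 0.
have hphi : forall i, \sum_j U i j * phi j = (inR s i)%:R * (lam * psi i 0).
  move=> i; rewrite -hpsi mulr_sumr; apply: eq_bigr => j _.
  case: (eqVneq (U i j) 0) => [->|hij]; first by rewrite !mul0r mulr0.
  by rewrite /phi (supp hU hs hij); ring.
have := unit_nrm hU1 phi.
have -> : (fun i => \sum_j U i j * phi j) = (fun i => (inR s i)%:R * (lam * psi i 0)).
  by apply: funext => i; exact: hphi.
rewrite /nrm /phi => heq2.
have e1 : forall (b : bool) (z : R[i]), conjc (b%:R * (lam * z)) * (b%:R * (lam * z)) =
    b%:R * (conjc z * z).
  move=> b z; rewrite !rmorphM rmorph_nat.
  transitivity (b%:R * b%:R * (conjc lam * lam) * (conjc z * z) : R[i]); first by ring.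
  by rewrite hlam mulr1; case: b => /=; rewrite ?mul1r ?mul0r.
have e2 : forall (b : bool) (z : R[i]), conjc (b%:R * z) * (b%:R * z) = b%:R * (conjc z * z).
  move=> b z; rewrite !rmorphM rmorph_nat.
  transitivity (b%:R * b%:R * (conjc z * z) : R[i]); first by ring.
  by case: b => /=; rewrite ?mul1r ?mul0r.
move: heq2.
under eq_bigr do rewrite e1.
under [X in _ = X -> _]eq_bigr do rewrite e2.
move=> heq3.
have := congr1 (@complex.Re R) heq3; rewrite !Re_sum.
under eq_bigr do rewrite Re_natM.
under [X in _ = X -> _]eq_bigr do rewrite Re_natM.
rewrite /rho /wt => ->.
rewrite exchange_big /=; apply: eq_bigr => j _.
by rewrite -mulr_suml Bset_sum.
Qed.


Lemma rho_ge0 psi s : 0 <= rho psi s.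
Proof. by apply: sumr_ge0 => i _; apply: mulr_ge0; [exact: ler0n|exact: wt_ge0]. Qed.

Lemma rho_marg psi s m : Stp m (fun e => rho psi (s ++ e)) = rho psi s.
Proof.
rewrite /Stp /rho exchange_big /=; apply: eq_bigr => i _.
rewrite -mulr_suml; have := @inR_marg m s i; rewrite /Stup => ->; done.
Qed.

Lemma rho_tot (psi : 'cV[R[i]]_Nn) : \sum_(i < Nn) `|psi i 0| ^+ 2 = 1 -> rho psi [::] = 1.
Proof.
move=> hn; rewrite /rho /=.
transitivity (complex.Re (\sum_(i < Nn) `|psi i 0| ^+ 2)); last by rewrite hn.
rewrite Re_sum; apply: eq_bigr => i _; by rewrite ltn_ord mul1r /wt sqr_normc mulrC.
Qed.

Lemma rho_inv (U : 'M[R[i]]_Nn) (hU : quantization p nn U) (psi : 'cV[R[i]]_Nn)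
  (heig : exists lam : R[i], U *m psi = lam *: psi)
  (hnorm : \sum_(i < Nn) `|psi i 0| ^+ 2 = 1) s a :
  ((a + size s) * Mx <= k)%N -> Stp a (fun e => rho psi (e ++ s)) = rho psi s.
Proof.
elim: a => [|a IH] h; first by rewrite Stp0.
rewrite Stp_cons /Stp exchange_big /=.
rewrite -[RHS]IH; last by apply: leq_trans h; apply: leq_mul => //; lia.
apply: eq_bigr => e _.
apply: (inv1 hU heig hnorm).
by rewrite size_cat size_tuple -addSn.
Qed.

Definition vs (s : seq 'I_l) : R := \prod_(x <- s) (Num.sqrt (Lam p nn x) : R)^-1.

Lemma vs_gt0 s : 0 < vs s.
Proof.
apply: prodr_gt0 => x _; rewrite invr_gt0 sqrtr_gt0 /Lam ltr0n; exact: pX_gt0.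
Qed.

Lemma vs_cat s1 s2 : vs (s1 ++ s2) = vs s1 * vs s2.
Proof. by rewrite /vs big_cat. Qed.

Lemma Fp0 (psi : 'cV[R[i]]_Nn) : \sum_(i < Nn) `|psi i 0| ^+ 2 = 1 -> Fp (rho psi) vs 0 = 0.
Proof.
move=> hn; rewrite /Fp Stp0 rho_tot // /vs big_nil expr1n !mul1r ln1; by rewrite oppr0.
Qed.

Lemma press_Fp (psi : 'cV[R[i]]_Nn) m : \sum_(i < Nn) `|psi i 0| ^+ 2 = 1 ->
  (m * Mx <= k)%N -> pressure p nn (mu_psi psi) m = Fp (rho psi) vs m.
Proof.
move=> hn hm; rewrite /pressure; case: (eqVneq m 0%N) => [->|m0] /=.
  by rewrite Fp0.
rewrite /Fp /Stp; congr (- _); apply: eq_bigr => e _.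
by rewrite cyl_cylS veps_seq mu_cyl // size_tuple.
Qed.

End Geo.

Lemma max_pow (p l : nat) (nn : 'I_l -> nat) : (0 < p)%N -> (0 < l)%N ->
  Lmax p nn = (p ^ (\max_(j < l) nn j))%N.
Proof.
move=> hp hl.
have cl : (0 < #|'I_l|)%N by rewrite card_ord.
have [j0 hj0] := @bigop.eq_bigmax _ nn cl.
rewrite /Lmax hj0; apply/eqP; rewrite eqn_leq; apply/andP; split.
  apply/bigmax_leqP => j _; rewrite leq_pexp2l //; rewrite -hj0; exact: leq_bigmax.
exact: (leq_bigmax (F := fun j => p ^ nn j)%N j0).
Qed.

Theorem proposition4 (R : realType) (p l : nat) (nn : 'I_l -> nat)
  (hp : (2 <= p)%N) (hnn : forall j, (1 <= nn j)%N)
  (hsum : \sum_(j < l) ((p%:R : R) ^- nn j) = 1)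
  (k : nat) (U : 'M[R[i]]_(p ^ k)) (hU : quantization p nn U)
  (psi : 'cV[R[i]]_(p ^ k))
  (hpsi_eig : exists lam : R[i], U *m psi = lam *: psi)
  (hpsi_norm : \sum_(i < p ^ k) `|psi i 0| ^+ 2 = 1)
  (q n r : nat) (hq : (1 <= q)%N) (hn : (1 <= n)%N) (hr : (r < n)%N)
  (hE : ((q * n + r)%N)%:Z =
        Num.floor (ln ((p ^ k)%:R : R) / ln ((Lmax p nn)%:R : R))) :
  pressure p nn (mu_psi psi) (q * n + r) <=
  q%:R * pressure p nn (mu_psi psi) n + pressure p nn (mu_psi psi) r.
Proof.
have hl : (0 < l)%N.
  case: (posnP l) => // l0; move: hsum.
  rewrite big1 => [/eqP|j]; first by rewrite eq_sym oner_eq0.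
  by have := ltn_ord j; move: (nat_of_ord j) => jj; rewrite l0.
set M := (\max_(j < l) nn j)%N.
have hM1 : (1 <= M)%N.
  by apply: leq_trans (hnn (Ordinal hl)) _; exact: leq_bigmax.
have hLmax := @max_pow p l nn (ltnW hp) hl.
have hnE : ((q * n + r) * M <= k)%N.
  move: hE; rewrite hLmax !natrX.
  have hp0 : (1 < (p%:R : R)) by rewrite ltr1n.
  have lp : 0 < ln (p%:R : R) by apply: ln_gt0.
  rewrite !lnXn ?(lt_trans ltr01) // => hE.
  have := floor_le (ln (p%:R : R) *+ k / (ln (p%:R : R) *+ M)); rewrite -hE.
  have hM0 : (M%:R : R) != 0 by rewrite pnatr_eq0 -lt0n.
  rewrite (_ : ln (p%:R : R) *+ k / (ln p%:R *+ M) = k%:R / M%:R); last first.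
    rewrite -[_ *+ k]mulr_natl -[_ *+ M]mulr_natl invfM.
    by field; rewrite hM0 gt_eqF.
  rewrite -[X in X <= _ -> _]/(((q * n + r)%N)%:R).
  rewrite ler_pdivlMr ?ltr0n //.
  by move=> h; rewrite -(ler_nat R) natrM.
have hMk : (M <= k)%N.
  apply: leq_trans hnE; rewrite -{1}(mul1n M) leq_mul2r; apply/orP; right.
  by apply: leq_trans (leq_addr _ _); rewrite -{1}(mul1n 1%N); exact: leq_mul.
have hb : forall m, (m <= q * n + r)%N -> (m * Mx nn <= k)%N.
  move=> m hm; apply: leq_trans hnE; exact: leq_mul.
have hn1 : (n <= q * n + r)%N.
  rewrite -{1}(mul1n n); apply: leq_trans (leq_addr _ _); exact: leq_mul.
have hr1 : (r <= q * n + r)%N by exact: leq_addl.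
rewrite (press_Fp hp hsum hMk hpsi_norm (hb _ (leqnn _))).
rewrite (press_Fp hp hsum hMk hpsi_norm (hb _ hn1)).
rewrite (press_Fp hp hsum hMk hpsi_norm (hb _ hr1)).
set F := Fp (rho nn psi) (vs R p nn).
have sub : forall a b, ((a + b) * M <= k)%N -> F (a + b) <= F a + F b.
  move=> a b h; apply: subadd.
  - exact: rho_ge0.
  - exact: vs_gt0.
  - exact: vs_cat.
  - exact: rho_marg.
  - move=> s2; apply: (rho_inv hp hsum hMk hU hpsi_eig hpsi_norm).
    by rewrite size_tuple.
  - exact: rho_tot.
have mult : forall j, (j * n * M <= k)%N -> F (j * n)%N <= j%:R * F n.
  elim=> [|j IH] h; first by rewrite mul0n /F Fp0 // mul0r.
  rewrite mulSn addnC.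
  have h0 : ((j * n + n) * M <= k)%N by rewrite addnC -mulSn.
  have h1 := sub (j * n)%N n h0.
  have h2 : F (j * n)%N <= j%:R * F n.
    apply: IH; apply: leq_trans h; rewrite leq_mul2r leq_mul2r ltnW ?orbT //.
  rewrite -addn1 natrD mulrDl mul1r; lra.
have h1 := sub (q * n)%N r hnE.
have h2 : F (q * n)%N <= q%:R * F n.
  apply: mult; apply: leq_trans hnE; rewrite leq_mul2r leq_addr orbT //.
lra.
Qed.
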